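(* Let $\mathcal A_r^\Pi=\{\mathcal O\in\mathcal A_r:[\mathcal O,\Pi_{GI}]=0\}$ and $\hat{\mathcal A}_r^\Pi=\{\hat{\mathcal O}\in\hat{\mathcal A}_r:[\hat{\mathcal O},\Pi_{GI}]=0\}$. Then $$\mathcal A_r^\Pi\,\Pi_{GI}=\hat{\mathcal A}_r^\Pi\,\Pi_{GI},$$ where $\mathcal X\Pi_{GI}$ denotes $\{X\Pi_{GI}:X\in\mathcal X\}$.
   Context: Setup. Let $G$ be a compact Lie group (possibly finite) with normalized Haar measure $dg$ ($\int dg=1$). Let $\Lambda=(V,E)$ be a finite directed graph; loops and multiple edges are allowed. Each edge $e$ carries $\mathcal H_e=L^2(G)$ with unitaries $L_e(g)|h\rangle_e=|gh\rangle_e$ and $R_e(g^{-1})|h\rangle_e=|hg^{-1}\rangle_e$. Each vertex $v$ carries a Hilbert space $\mathcal H_v$ with a unitary representation $U_v$ of $G$. All these spaces are taken finite-dimensional by truncating to finitely many irreducible isotypic sectors, which are invariant under the group actions. The pre-gauged space is $\mathcal H=\bigotimes_v\mathcal H_v\otimes\bigotimes_e\mathcal H_e$, with $\mathcal A=\mathcal B(\mathcal H)$. The gauge transformation at $v$ is $A_v(g)=U_v(g)\prod_{e\in E^-(v)}L_e(g)\prod_{e\in E^+(v)}R_e(g^{-1})$, where $E^-(v)$ is the set of edges oriented out of $v$ and $E^+(v)$ the set of edges oriented into $v$. Set $\Pi_v=\int dg\,A_v(g)$; these are mutually commuting orthogonal projections. Set $\Pi_{GI}=\prod_v\Pi_v$.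 Subregions. A subregion $r$ is an arbitrary subset of $V\cup E$, and $\bar r$ is its complement. Let $\mathcal H_r=\bigotimes_{x\in r}\mathcal H_x$ and $\mathcal A_r=\mathcal B(\mathcal H_r)\otimes 1_{\bar r}$. Let $V_r$ be the set of vertices $v$ such that $v$ and all edges incident to $v$ lie in $r$, and put $\Pi_{V_r}=\prod_{v\in V_r}\Pi_v$; this is an operator in $\mathcal A_r$. The partially gauged algebra is $\hat{\mathcal A}_r=\{\Pi_{V_r}\mathcal O\Pi_{V_r}:\mathcal O\in\mathcal A_r\}$, i.e. the operators on $\hat{\mathcal H}_r=\Pi_{V_r}\mathcal H_r$ tensored with $1_{\bar r}$. *)

(* Defs.v *)
From HB Require Import structures.
From mathcomp Require Import all_boot all_order all_algebra.
Set Implicit Arguments. Unset Strict Implicit. Unset Printing Implicit Defensive.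
Import Order.TTheory GRing.Theory Num.Theory.
Local Open Scope ring_scope.

Section LatticeGauge.
Variables (C : numClosedFieldType) (V E : finType) (src tgt : E -> V).
(* sites of the graph: vertices and edges *)
Variable d : V + E -> nat.  (* (truncated) dimension of the local Hilbert space *)

(* product basis of H = (x)_v H_v (x) (x)_e H_e *)
Definition basis := {dffun forall x : V + E, 'I_(d x)}.
Definition dimH := #|basis|.
Definition op := 'M[C]_dimH.
Definition bidx (k : 'I_dimH) : basis := enum_val k.

Definition agree (S : {set V + E}) (i j : basis) := [forall x in S, i x == j x].

(* O belongs to A_r = B(H_r) (x) 1_{rbar} *)
Definition in_Ar (r : {set V + E}) (O : op) : Prop :=
  exists f : basis -> basis -> C,
    (forall i i' j j', agree r i i' -> agree r j j' -> f i j = f i' j') /\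
    (forall k l, O k l = if agree (~: r) (bidx k) (bidx l)
                         then f (bidx k) (bidx l) else 0).

Definition adjmx (A : op) : op := (map_mx (fun z : C => z^*) A)^T.

Definition star (v : V) : {set V + E} :=
  [set x | match x with
           | inl w => w == v
           | inr e => (src e == v) || (tgt e == v) end].

Definition Vr (r : {set V + E}) : {set V} := [set v | star v \subset r].

Definition prod_proj (Pi : V -> op) (S : {set V}) : op :=
  \big[@mulmx C dimH dimH dimH / 1%:M]_(v in S) Pi v.

Definition PiGI (Pi : V -> op) : op := prod_proj Pi setT.

(* partially gauged algebra \hat A_r, as operators on H *)
Definition in_hat (Pi : V -> op) (r : {set V + E}) (Oh : op) : Prop :=
  exists O, in_Ar r O /\ Oh = prod_proj Pi (Vr r) *m O *m prod_proj Pi (Vr r).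

(* A_r^Pi Pi_GI and \hat A_r^Pi Pi_GI, as predicates on operators *)
Definition A_Pi_times (Pi : V -> op) (r : {set V + E}) (X : op) : Prop :=
  exists O, in_Ar r O /\ O *m PiGI Pi = PiGI Pi *m O /\ X = O *m PiGI Pi.

Definition Ahat_Pi_times (Pi : V -> op) (r : {set V + E}) (X : op) : Prop :=
  exists Oh, in_hat Pi r Oh /\ Oh *m PiGI Pi = PiGI Pi *m Oh /\ X = Oh *m PiGI Pi.

End LatticeGauge.

(* Main.v *)
Require Import Defs.
From HB Require Import structures.
From mathcomp Require Import all_boot all_order all_algebra.
Set Implicit Arguments. Unset Strict Implicit. Unset Printing Implicit Defensive.
Import Order.TTheory GRing.Theory Num.Theory.
Local Open Scope ring_scope.

Definition mrg (V E : finType) (d : V + E -> nat) (S : {set V + E}) (a b : basis d) : basis d :=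
  [ffun x : V + E => if x \in S then a x else b x].
Lemma mrgE (V E : finType) (d : V + E -> nat) (S : {set V + E}) (a b : basis d) x : mrg S a b x = if x \in S then a x else b x.
Proof. by rewrite /mrg ffunE. Qed.

Lemma agreeP (V E : finType) (d : V + E -> nat) (S : {set V + E}) (i j : basis d) :
  reflect (forall x, x \in S -> i x = j x) (agree S i j).
Proof.
apply: (iffP forallP) => H x.
  by move=> xS; apply/eqP; exact: (implyP (H x)).
by apply/implyP => xS; apply/eqP/H.
Qed.

Definition rk (V E : finType) (d : V + E -> nat) (i : basis d) : 'I_(dimH d) := enum_rank i.

Lemma bidx_rk (V E : finType) (d : V + E -> nat) (i : basis d) : bidx (rk i) = i.
Proof. exact: enum_rankK. Qed.
Lemma rk_bidx (V E : finType) (d : V + E -> nat) (k : 'I_(dimH d)) : rk (bidx k) = k.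
Proof. exact: enum_valK. Qed.

Definition QA (C : numClosedFieldType) (V E : finType) (d : V + E -> nat) (r : {set V + E}) (O : op C d) :=
  (forall i j : basis d, ~~ agree (~: r) i j -> O (rk i) (rk j) = 0) /\
  (forall i j i' j' : basis d, agree (~: r) i j -> agree (~: r) i' j' ->
     agree r i i' -> agree r j j' -> O (rk i) (rk j) = O (rk i') (rk j')).

Lemma Ar_QA (C : numClosedFieldType) (V E : finType) (d : V + E -> nat) r (O : op C d) : @in_Ar C V E d r O -> QA r O.
Proof.
case=> f [Hf HO]; split.
  by move=> i j H; rewrite HO !bidx_rk (negbTE H).
move=> i j i' j' H1 H2 H3 H4; rewrite !HO !bidx_rk H1 H2; exact: Hf.
Qed.

Lemma QA_Ar (C : numClosedFieldType) (V E : finType) (d : V + E -> nat) r (O : op C d) : QA r O -> @in_Ar C V E d r O.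
Proof.
case=> H0 H1; exists (fun i j => O (rk i) (rk (mrg r j i))); split.
  move=> i i' j j' Hi Hj; apply: H1.
  - by apply/agreeP => x; rewrite in_setC mrgE => /negbTE ->.
  - by apply/agreeP => x; rewrite in_setC mrgE => /negbTE ->.
  - exact: Hi.
  - apply/agreeP => x xr; rewrite !mrgE xr; exact: (agreeP _ _ _ Hj).
move=> k l; rewrite -{1}(rk_bidx k) -{1}(rk_bidx l).
case: ifP => Ha; last by rewrite H0 ?Ha.
congr (O _ (rk _)); apply/ffunP => x; rewrite mrgE.
case: ifP => // xr; apply/esym; apply: (agreeP _ _ _ Ha); by rewrite in_setC xr.
Qed.

Lemma QA_mono (C : numClosedFieldType) (V E : finType) (d : V + E -> nat) (S r : {set V + E}) (O : op C d) : S \subset r -> @QA C V E d S O -> QA r O.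
Proof.
move=> sSr [H0 H1].
have tr : forall i j i' j' : basis d, agree (~: r) i j -> agree (~: r) i' j' ->
     agree r i i' -> agree r j j' -> agree (~: S) i j -> agree (~: S) i' j'.
  move=> i j i' j' /agreeP A1 /agreeP A2 /agreeP A3 /agreeP A4 /agreeP A5.
  apply/agreeP => x; rewrite in_setC => xS.
  case xr: (x \in r).
    by rewrite -(A3 x xr) -(A4 x xr) A5 // in_setC.
  by apply: A2; rewrite in_setC xr.
split.
  move=> i j Hn; apply: H0; apply: contra Hn => /agreeP A; apply/agreeP => x.
  rewrite !in_setC => xr; apply: A; rewrite in_setC; apply: contra xr; exact: (subsetP sSr).
move=> i j i' j' A1 A2 A3 A4.
case HS: (agree (~: S) i j).
  apply: H1 => //; first exact: (tr i j i' j').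
  - apply/agreeP => x xS; exact: (agreeP _ _ _ A3 x (subsetP sSr x xS)).
  - apply/agreeP => x xS; exact: (agreeP _ _ _ A4 x (subsetP sSr x xS)).
rewrite !H0 ?HS //.
apply/negP => HS'; move/negP: HS; apply.
apply: (tr i' j' i j) => //.
- apply/agreeP => x xr; apply/esym; exact: (agreeP _ _ _ A3).
- apply/agreeP => x xr; apply/esym; exact: (agreeP _ _ _ A4).
Qed.

Lemma sum_basis (C : numClosedFieldType) (V E : finType) (d : V + E -> nat) (g : basis d -> C) :
  \sum_(m < dimH d) g (bidx m) = \sum_b g b.
Proof.
rewrite (reindex (@rk V E d)) /=; last by exists (@bidx V E d) => x _; [exact: bidx_rk | exact: rk_bidx].
by apply: eq_bigr => b _; rewrite bidx_rk.
Qed.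

Lemma agree_trans (V E : finType) (d : V + E -> nat) (S : {set V + E}) (i j k : basis d) :
  agree S i j -> agree S j k -> agree S i k.
Proof. move=> /agreeP A /agreeP B; apply/agreeP => x xS; by rewrite A // B. Qed.
Lemma agree_sym (V E : finType) (d : V + E -> nat) (S : {set V + E}) (i j : basis d) :
  agree S i j -> agree S j i.
Proof. move=> /agreeP A; apply/agreeP => x xS; by rewrite A. Qed.

Lemma mulE (C : numClosedFieldType) (V E : finType) (d : V + E -> nat) (A B : op C d) i j :
  (A *m B) (rk i) (rk j) = \sum_(b : basis d) A (rk i) (rk b) * B (rk b) (rk j).
Proof.
rewrite mxE -(sum_basis (fun b : basis d => A (rk i) (rk b) * B (rk b) (rk j))).
by apply: eq_bigr => m _; rewrite rk_bidx.
Qed.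

Lemma QA_mul (C : numClosedFieldType) (V E : finType) (d : V + E -> nat) r (A B : op C d) :
  QA r A -> QA r B -> QA r (A *m B).
Proof.
move=> [A0 A1] [B0 B1].
have cut : forall i j : basis d, \sum_(b : basis d) A (rk i) (rk b) * B (rk b) (rk j)
   = \sum_(b | agree (~: r) i b) A (rk i) (rk b) * B (rk b) (rk j).
  move=> i j; rewrite (bigID (fun b => agree (~: r) i b)) /= [X in _ + X]big1 ?addr0 //.
  by move=> b /negbTE H; rewrite A0 ?H // mul0r.
split.
  move=> i j Hn; rewrite mulE cut big1 // => b Hb.
  rewrite B0 ?mulr0 //; apply: contra Hn; exact: agree_trans.
move=> i j i' j' H1 H2 H3 H4; rewrite !mulE !cut.
rewrite (reindex_onto (fun b => mrg r b i) (fun b => mrg r b i')); last first.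
  move=> b Hb; apply/ffunP => x; rewrite !mrgE; case xr: (x \in r) => //.
  by apply: (agreeP _ _ _ Hb); rewrite in_setC xr.
apply: (eq_big (fun b => agree (~: r) i' b)).
  move=> b; have -> : agree (~: r) i (mrg r b i).
    by apply/agreeP => x; rewrite in_setC mrgE => /negbTE ->.
  rewrite /=; apply/eqP/idP.
    move=> <-; apply/agreeP => x; rewrite in_setC !mrgE => /negbTE ->; done.
  move=> Hb; apply/ffunP => x; rewrite !mrgE; case xr: (x \in r) => //.
  by apply: (agreeP _ _ _ Hb); rewrite in_setC xr.
move=> b /andP [_ /eqP Hb].
have Hb' : agree (~: r) i' b.
  rewrite -Hb; apply/agreeP => x; rewrite in_setC !mrgE => /negbTE ->; done.
have Ar : agree r (mrg r b i) b.
  by apply/agreeP => x xr; rewrite mrgE xr.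
have Ai : agree (~: r) i (mrg r b i).
  by apply/agreeP => x; rewrite in_setC mrgE => /negbTE ->.
congr (_ * _).
  by apply: A1.
apply: B1 => //.
- exact: agree_trans (agree_sym Ai) H1.
- exact: agree_trans (agree_sym Hb') H2.
Qed.

Lemma QA_1 (C : numClosedFieldType) (V E : finType) (d : V + E -> nat) r : QA r (1%:M : op C d).
Proof.
split.
  move=> i j Hn; rewrite mxE; case: eqP => // /(congr1 (@bidx V E d)); rewrite !bidx_rk => eij.
  by move: Hn; rewrite eij; case/negP; apply/agreeP.
move=> i j i' j' H1 H2 H3 H4; rewrite !mxE.
have e : forall a b : basis d, (rk a == rk b) = (a == b).
  move=> a b; apply/eqP/eqP => [e|->] //.
  by move/(congr1 (@bidx V E d)): e; rewrite !bidx_rk.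
rewrite !e; congr (_%:R); congr nat_of_bool.
apply/eqP/eqP => e1; apply/ffunP => x; case xr: (x \in r).
- by rewrite -(agreeP _ _ _ H3 x xr) -(agreeP _ _ _ H4 x xr) e1.
- by rewrite -(agreeP _ _ _ H2 x) ?in_setC ?xr.
- by rewrite (agreeP _ _ _ H3 x xr) (agreeP _ _ _ H4 x xr) e1.
- by rewrite -(agreeP _ _ _ H1 x) ?in_setC ?xr.
Qed.

Lemma absorb_l (C : numClosedFieldType) (V E : finType) (d : V + E -> nat) (Pi : V -> op C d)
  (Pi_idem : forall v, Pi v *m Pi v = Pi v)
  (Pi_comm : forall v w, Pi v *m Pi w = Pi w *m Pi v) v (s : seq V) (P : pred V) :
  v \in s -> P v ->
  Pi v *m \big[@mulmx C (dimH d) (dimH d) (dimH d) / 1%:M]_(w <- s | P w) Pi w =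
  \big[@mulmx C (dimH d) (dimH d) (dimH d) / 1%:M]_(w <- s | P w) Pi w.
Proof.
move=> + Pv; elim: s => // w s IH; rewrite inE big_cons.
case: (eqVneq v w) => [<- _|nvw /= vs]; first by rewrite Pv mulmxA Pi_idem.
case: ifP => _; last exact: IH.
by rewrite mulmxA Pi_comm -mulmxA IH.
Qed.

Lemma comm_prod (C : numClosedFieldType) (V E : finType) (d : V + E -> nat) (Pi : V -> op C d)
  (Pi_comm : forall v w, Pi v *m Pi w = Pi w *m Pi v) v (s : seq V) (P : pred V) :
  Pi v *m \big[@mulmx C (dimH d) (dimH d) (dimH d) / 1%:M]_(w <- s | P w) Pi w =
  \big[@mulmx C (dimH d) (dimH d) (dimH d) / 1%:M]_(w <- s | P w) Pi w *m Pi v.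
Proof.
apply: (big_ind (fun B => Pi v *m B = B *m Pi v)).
- by rewrite mulmx1 mul1mx.
- by move=> x y Hx Hy; rewrite mulmxA Hx -mulmxA Hy mulmxA.
- by move=> w _; apply: Pi_comm.
Qed.

Lemma PG_lemma (C : numClosedFieldType) (V E : finType) (d : V + E -> nat) (Pi : V -> op C d)
  (Pi_idem : forall v, Pi v *m Pi v = Pi v)
  (Pi_comm : forall v w, Pi v *m Pi w = Pi w *m Pi v) (S : {set V}) :
  prod_proj Pi S *m PiGI Pi = PiGI Pi /\ PiGI Pi *m prod_proj Pi S = PiGI Pi.
Proof.
have L : forall v, Pi v *m PiGI Pi = PiGI Pi.
  move=> v; rewrite /PiGI /prod_proj; apply: absorb_l => //; rewrite ?mem_index_enum ?in_setT.
have R : forall v, PiGI Pi *m Pi v = PiGI Pi.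
  by move=> v; rewrite /PiGI /prod_proj -comm_prod //; apply: L.
split.
  apply: (big_ind (fun X => X *m PiGI Pi = PiGI Pi)); first exact: mul1mx.
    by move=> x y Hx Hy; rewrite -mulmxA Hy Hx.
  by move=> w _; apply: L.
apply: (big_ind (fun X => PiGI Pi *m X = PiGI Pi)); first exact: mulmx1.
  by move=> x y Hx Hy; rewrite mulmxA Hx Hy.
by move=> w _; apply: R.
Qed.

Theorem lemma3 (C : numClosedFieldType) (V E : finType) (src tgt : E -> V)
  (d : V + E -> nat) (Pi : V -> op C d)
  (Pi_idem : forall v, Pi v *m Pi v = Pi v)
  (Pi_herm : forall v, adjmx (Pi v) = Pi v)
  (Pi_comm : forall v w, Pi v *m Pi w = Pi w *m Pi v)
  (Pi_local : forall v, @in_Ar C V E d (star src tgt v) (Pi v))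
  (r : {set V + E}) :
  forall X : op C d,
    @A_Pi_times C V E d Pi r X <-> @Ahat_Pi_times C V E src tgt d Pi r X.
Proof.
move=> X; set P := prod_proj Pi (Vr src tgt r); set G := PiGI Pi.
have [PG GP] := PG_lemma Pi_idem Pi_comm (Vr src tgt r); rewrite -/P -/G in PG GP.
split.
  case=> O [HO [Hc ->]]; exists (P *m O *m P).
  have E1 : P *m O *m P *m G = O *m G.
    by rewrite -!mulmxA PG Hc mulmxA PG.
  have E2 : G *m (P *m O *m P) = O *m G.
    by rewrite !mulmxA GP -Hc -mulmxA GP.
  split; first by exists O.
  by split; [rewrite E1 E2 | rewrite E1].
case=> Oh [[O [HO ->]] [Hc ->]]; exists (P *m O *m P); split => //.
have QP : QA r P.
  apply: (big_ind (fun X => QA r X)); first exact: QA_1.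
    by move=> x y; apply: QA_mul.
  move=> v; rewrite inE => sv; apply: (QA_mono sv); exact: Ar_QA.
apply: QA_Ar; apply: QA_mul => //; apply: QA_mul => //; exact: Ar_QA.
Qed.
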